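(* Let $X$ be a non-empty set, $(Y,\langle\cdot,\cdot\rangle)$ a real inner product space, and let $I:X\to\mathbb{R}$, $\Phi:X\to Y$ be such that (i) $\sup_X I<+\infty$; (ii) $\inf_{z\in\Phi(X)}\langle z,y\rangle=-\infty$ for all $y\in\Phi(X)\setminus\{0\}$. Then, for each $\mu>0$, at least one of the following assertions holds: (a) for each filtering cover $\mathcal{N}$ of $X$ there exists $A\in\mathcal{N}$ such that $$\sup_{\lambda\in Y}\inf_{x\in A}\big(I(x)+\mu(2\langle\Phi(x),\lambda\rangle-\|\lambda\|^2)\big)<\inf_{x\in A}\sup_{\lambda\in\Phi(A)}\big(I(x)+\mu(2\langle\Phi(x),\lambda\rangle-\|\lambda\|^2)\big);$$ (b) the set of all global minima in $X$ of the function $x\mapsto I(x)+\mu\|\Phi(x)\|^2$ is contained in $\Phi^{-1}(0)$.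
   Context: A family $\mathcal{N}$ of non-empty subsets of $X$ is a filtering cover of $X$ if $\bigcup_{A\in\mathcal{N}}A=X$ and for each $A_1,A_2\in\mathcal{N}$ there is $A_3\in\mathcal{N}$ with $A_1\cup A_2\subseteq A_3$. *)

(* Defs.v *)
From HB Require Import structures.
From mathcomp Require Import all_boot all_order all_algebra.
From mathcomp Require Import all_classical all_reals.
From mathcomp Require Import ereal.
Set Implicit Arguments. Unset Strict Implicit. Unset Printing Implicit Defensive.
Import Order.TTheory GRing.Theory Num.Theory.
Local Open Scope classical_set_scope.
Local Open Scope ring_scope.

Record is_inner_product (R : realType) (Y : lmodType R) (ip : Y -> Y -> R) : Prop := {
  ip_sym : forall x y, ip x y = ip y x;
  ip_linD : forall x y z, ip (x + y) z = ip x z + ip y z;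
  ip_linZ : forall (a : R) x y, ip (a *: x) y = a * ip x y;
  ip_ge0 : forall x, 0 <= ip x x;
  ip_eq0 : forall x, ip x x = 0 -> x = 0
}.

Definition ip_norm (R : realType) (Y : lmodType R) (ip : Y -> Y -> R) (y : Y) : R :=
  Num.sqrt (ip y y).

Definition filtering_cover (X : Type) (N : set (set X)) : Prop :=
  (forall A, N A -> A !=set0) /\
  (\bigcup_(A in N) A = [set: X]) /\
  (forall A1 A2, N A1 -> N A2 -> exists2 A3, N A3 & A1 `|` A2 `<=` A3).

(* Main.v *)
Require Import Defs.
From HB Require Import structures.
From mathcomp Require Import all_boot all_order all_algebra.
From mathcomp Require Import all_classical all_reals.
From mathcomp Require Import ereal.
From mathcomp Require Import ring lra.
Import Order.TTheory GRing.Theory Num.Theory.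
Local Open Scope classical_set_scope.
Local Open Scope ring_scope.

Lemma alg (R : realType) (I0 I1 mu t p q r w sa sb : R) :
  0 < mu -> 0 < t ->
  0 < I0 + mu * p - (I1 + mu * (2 * r - p)) ->
  t * ((I0 + mu * p - (I1 + mu * (2 * r - p))) + 2 * mu * (q - 2 * r + p))
     = I0 + mu * p - (I1 + mu * (2 * r - p)) ->
  0 <= 1 ^+ 2 * w + (t - 1) ^+ 2 * p + (- t) ^+ 2 * q +
    2 * 1 * (t - 1) * sa + 2 * 1 * - t * sb + 2 * (t - 1) * - t * r ->
  (1 - t) * (I0 + mu * (2 * sa - w)) + t * (I1 + mu * (2 * sb - w)) <=
  (I0 + mu * p) - t * (I0 + mu * p - (I1 + mu * (2 * r - p))) / 2.
Proof.
set K := I0 + mu * p - (I1 + mu * (2 * r - p)).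
set C := q - 2 * r + p.
set V := (X in 0 <= X -> _).
move=> mu0 t0 K0 tK V0.
have id1 : (1 - t) * (I0 + mu * (2 * sa - w)) + t * (I1 + mu * (2 * sb - w))
   = I0 + mu * p - t * K + mu * t^+2 * C - mu * V.
  rewrite /K /C /V. ring.
have id2 : mu * t^+2 * C = (t * K - t^+2 * K) / 2.
  have e1 : t * (2 * mu * C) = K - t * K by move: tK; rewrite mulrDr; lra.
  have -> : mu * t^+2 * C = t * (t * (2 * mu * C)) / 2 by field.
  by rewrite e1 mulrBr expr2 mulrA.
have h1 : 0 <= mu * V by rewrite mulr_ge0 // ltW.
have h2 : 0 <= t^+2 * K by rewrite mulr_ge0 // ?sqr_ge0 // ltW.
rewrite id1 id2; lra.
Qed.

Section Helpers.
Variables (R : realType) (Y : lmodType R) (ip : Y -> Y -> R).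
Hypothesis hip : is_inner_product ip.

Lemma ip_linDr x y z : ip x (y + z) = ip x y + ip x z.
Proof. by rewrite ip_sym // ip_linD // !(ip_sym hip _ x). Qed.

Lemma ip_linZr (a : R) x y : ip x (a *: y) = a * ip x y.
Proof. by rewrite ip_sym // ip_linZ // (ip_sym hip y). Qed.

Lemma ip_comb3 (al be ga : R) x y z :
  ip (al *: x + be *: y + ga *: z) (al *: x + be *: y + ga *: z) =
  al^+2 * ip x x + be^+2 * ip y y + ga^+2 * ip z z
  + 2 * al * be * ip x y + 2 * al * ga * ip x z + 2 * be * ga * ip y z.
Proof.
rewrite !(ip_linD hip) !ip_linDr !(ip_linZ hip) !ip_linZr.
rewrite (ip_sym hip y x) (ip_sym hip z x) (ip_sym hip z y).
ring.
Qed.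

Lemma ip_norm2 y : ip_norm ip y ^+ 2 = ip y y.
Proof. by rewrite /ip_norm sqr_sqrtr // ip_ge0. Qed.

End Helpers.
Arguments ip_linDr {R Y ip}.
Arguments ip_linZr {R Y ip}.
Arguments ip_comb3 {R Y ip}.
Arguments ip_norm2 {R Y ip}.

Theorem theorem3p5 (R : realType) (X : Type) (Y : lmodType R)
  (ip : Y -> Y -> R) (I : X -> R) (Phi : X -> Y) :
  is_inner_product ip ->
  [set: X] !=set0 ->
  (ereal_sup [set (I x)%:E | x in [set: X]] < +oo)%E ->
  (forall y, y \in Phi @` [set: X] -> y != 0 ->
     ereal_inf [set (ip z y)%:E | z in Phi @` [set: X]] = -oo%E) ->
  forall mu : R, 0 < mu ->
  let L := fun (x : X) (lam : Y) =>
             I x + mu * (2 * ip (Phi x) lam - ip_norm ip lam ^+ 2) in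
  (forall N : set (set X), filtering_cover N ->
     exists2 A, N A &
       (ereal_sup [set ereal_inf [set (L x lam)%:E | x in A] | lam in [set: Y]]
        < ereal_inf [set ereal_sup [set (L x lam)%:E | lam in Phi @` A] | x in A])%E)
  \/
  (forall x0 : X,
     (forall x : X, I x0 + mu * ip_norm ip (Phi x0) ^+ 2
                    <= I x + mu * ip_norm ip (Phi x) ^+ 2) ->
     Phi x0 = 0).
Proof.
move=> hip hne hsup hinf mu mu0 L.
case: (pselect (forall x0 : X,
     (forall x : X, I x0 + mu * ip_norm ip (Phi x0) ^+ 2
                    <= I x + mu * ip_norm ip (Phi x) ^+ 2) ->
     Phi x0 = 0)) => hb; [by right | left].
have [x0 [hmin hne0]] : exists x0, (forall x : X, I x0 + mu * ip_norm ip (Phi x0) ^+ 2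
                    <= I x + mu * ip_norm ip (Phi x) ^+ 2) /\ Phi x0 <> 0.
  apply: contrapT => nex; apply: hb => x0 hm; apply: contrapT => hn.
  by apply: nex; exists x0.
set a := Phi x0.
set m := I x0 + mu * ip a a.
have hmin' : forall x, m <= I x + mu * ip (Phi x) (Phi x).
  by move=> x; have := hmin x; rewrite !(ip_norm2 hip).
set s := ereal_sup [set (I x)%:E | x in [set: X]].
have Is x : ((I x)%:E <= s)%E by apply: ereal_sup_ubound; exists x.
have sfin : s \is a fin_num.
  rewrite fin_numE; apply/andP; split; last by rewrite lt_eqF.
  by apply/negP => /eqP hs; have := Is x0; rewrite hs.
set S := fine s.
have IS x : I x <= S by rewrite -lee_fin /S fineK.
set M := (m - S + mu * ip a a) / (2 * mu) - 1.
have [x1 hx1] : exists x1, ip (Phi x1) a < M.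
  apply: contrapT => nex.
  have : (M%:E <= ereal_inf [set (ip z a)%:E | z in Phi @` [set: X]])%E.
    apply: le_ereal_inf_tmp => _ [_ [x _ <-] <-]; rewrite lee_fin.
    by rewrite leNgt; apply/negP => h; apply: nex; exists x.
  rewrite hinf //; first by apply/mem_set; exists x0.
  by apply/eqP.
set b := Phi x1.
set K := m - (I x1 + mu * (2 * ip a b - ip a a)).
have K0 : 0 < K.
  have h1 := IS x1.
  have h2 : 2 * mu * ip b a < 2 * mu * M.
    by rewrite ltr_pM2l // mulr_gt0.
  have h3 : 2 * mu * M = m - S + mu * ip a a - 2 * mu.
    rewrite /M mulrBr mulr1 mulrC divfK //; by rewrite mulf_neq0 // gt_eqF.
  rewrite /K (ip_sym hip a b); lra.
set C := ip b b - 2 * ip a b + ip a a.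
have C0 : 0 <= C.
  have := ip_ge0 hip (0 *: a + (-1) *: a + 1 *: b).
  rewrite (ip_comb3 hip) /C; lra.
set t := K / (K + 2 * mu * C).
have D0 : 0 < K + 2 * mu * C.
  have : 0 <= mu * C by rewrite mulr_ge0 // ltW.
  lra.
have t0 : 0 < t by rewrite divr_gt0.
have t1 : t <= 1.
  rewrite ler_pdivrMr // mul1r.
  have : 0 <= mu * C by rewrite mulr_ge0 // ltW.
  lra.
have tK : t * (K + 2 * mu * C) = K by rewrite /t divfK // gt_eqF.
have key : forall lam, (1 - t) * L x0 lam + t * L x1 lam <= m - t * K / 2.
  move=> lam.
  have hV := ip_ge0 hip (1 *: lam + (t - 1) *: a + (- t) *: b).
  rewrite (ip_comb3 hip) in hV.
  rewrite /L !(ip_norm2 hip) -/a -/b.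
  have e1 : ip a lam = ip lam a := ip_sym hip a lam.
  have e2 : ip b lam = ip lam b := ip_sym hip b lam.
  rewrite e1 e2 /m.
  move: tK K0 hV; rewrite /K /C /m => tK' K0' hV'. exact: (@alg _ _ _ _ _ _ _ _ _ _ _ mu0 t0 K0' tK' hV').
move=> N [_ [cov dir]].
have : [set: X] x0 by [].
rewrite -cov => -[A0 NA0 A0x0].
have : [set: X] x1 by [].
rewrite -cov => -[A1 NA1 A1x1].
have [A NA sub] := dir _ _ NA0 NA1.
have Ax0 : A x0 by apply: sub; left.
have Ax1 : A x1 by apply: sub; right.
exists A => //.
apply: (@le_lt_trans _ _ (m - t * K / 2)%:E).
  apply: ge_ereal_sup => _ [lam _ <-].
  have h0 : (ereal_inf [set (L x lam)%:E | x in A] <= (L x0 lam)%:E)%E.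
    by apply: ereal_inf_lbound; exists x0.
  have h1 : (ereal_inf [set (L x lam)%:E | x in A] <= (L x1 lam)%:E)%E.
    by apply: ereal_inf_lbound; exists x1.
  have := key lam.
  move: h0 h1; set f := L x0 lam; set g := L x1 lam => h0 h1 hk.
  case: (leP f g) => hle.
  - apply: (le_trans h0); rewrite lee_fin.
    have hh : 0 <= t * (g - f) by rewrite mulr_ge0 ?subr_ge0 // ltW.
    rewrite mulrBr in hh; lra.
  - apply: (le_trans h1); rewrite lee_fin.
    have hh : 0 <= (1 - t) * (f - g) by rewrite mulr_ge0 ?subr_ge0 // ltW.
    rewrite mulrBr in hh; lra.
apply: (@lt_le_trans _ _ m%:E).
  rewrite lte_fin; have : 0 < t * K by rewrite mulr_gt0.
  lra.
apply: le_ereal_inf_tmp => _ [x Ax <-].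
apply: (@le_trans _ _ (L x (Phi x))%:E); last first.
  by apply: ereal_sup_ubound; exists (Phi x) => //; exists x.
have e : forall v : R, 2 * v - v = v by move=> v; ring.
by rewrite lee_fin /L (ip_norm2 hip) e; apply: hmin'.
Qed.
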